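(* Let $A,B\in M_\ell(F)$ commute, $H_X=(A\ \ B)$, $H_Z=(B^T\ \ -A^T)$, and fix idempotents $E_A,F_A$ associated with $A$ and $E_B,F_B$ associated with $B$. Define $$H_X^{(L)}=\begin{pmatrix}A&B\\0&I-E_A\end{pmatrix},\quad H_X^{(R)}=\begin{pmatrix}A&B\\ I-E_B&0\end{pmatrix},\quad H_Z^{(L)}=\begin{pmatrix}B^T&-A^T\\ (I-F_A)^T&0\end{pmatrix},\quad H_Z^{(R)}=\begin{pmatrix}B^T&-A^T\\ 0&(I-F_B)^T\end{pmatrix}.$$ Then for each $\mu\in\{L,R\}$, $$d_Z\bigl(\mathrm{CSS}(H_X,H_Z)\bigr)=\min\Bigl\{d_Z\bigl(\mathrm{CSS}(H_X^{(\mu)},H_Z)\bigr),\ d_Z\bigl(\mathrm{CSS}(H_X,H_Z^{(\mu)})\bigr)\Bigr\}.$$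
   Context: $F=\mathbb F_q$ is a finite field. For $H_X,H_Z$ with $H_XH_Z^T=0$, $d_Z(\mathrm{CSS}(H_X,H_Z))=\min\{\mathrm{wgt}(c):c\in C_{H_X}^\perp\setminus C_{H_Z}\}$, where $C_H$ is the row space of $H$, $C_H^\perp$ its orthogonal complement, and the minimum of the empty set is $\infty$. Idempotents associated with $A$: any $E_A,F_A$ with $E_A^2=E_A$, $F_A^2=F_A$, $\mathrm{rank}E_A=\mathrm{rank}F_A=\mathrm{rank}A$, $E_AA=AF_A=A$; similarly $E_B,F_B$ for $B$. (All pairs of matrices above satisfy the CSS orthogonality condition.) *)

(* Defs.v *)
From HB Require Import structures.
From mathcomp Require Import all_boot all_order all_algebra all_field.
Set Implicit Arguments. Unset Strict Implicit. Unset Printing Implicit Defensive.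
Import GRing.Theory.
Local Open Scope ring_scope.

Definition wgt (F : finFieldType) (n : nat) (c : 'rV[F]_n) : nat :=
  #|[set i : 'I_n | c 0 i != 0]|.

Definition in_dual (F : finFieldType) (m n : nat) (H : 'M[F]_(m, n))
  (c : 'rV[F]_n) : bool := H *m c^T == 0.

Definition dZ_set (F : finFieldType) (mx mz n : nat)
  (HX : 'M[F]_(mx, n)) (HZ : 'M[F]_(mz, n)) : {set 'rV[F]_n} :=
  [set c : 'rV[F]_n | in_dual HX c && ~~ (c <= HZ)%MS].

(* Z-distance; None encodes infinity (minimum of the empty set). *)
Definition dZ (F : finFieldType) (mx mz n : nat)
  (HX : 'M[F]_(mx, n)) (HZ : 'M[F]_(mz, n)) : option nat :=
  match [pick c in dZ_set HX HZ] with
  | Some c0 => Some (\big[minn/wgt c0]_(c in dZ_set HX HZ) wgt c)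
  | None => None
  end.

Definition minO (a b : option nat) : option nat :=
  match a, b with
  | None, _ => b
  | _, None => a
  | Some x, Some y => Some (minn x y)
  end.

Definition assoc_idempotents (F : finFieldType) (l : nat) (A E G : 'M[F]_l) : Prop :=
  E *m E = E /\ G *m G = G /\ \rank E = \rank A /\ \rank G = \rank A /\
  E *m A = A /\ A *m G = A.

(* Main.v *)
Require Import Defs.
From HB Require Import structures.
From mathcomp Require Import all_boot all_order all_algebra all_field.
Import GRing.Theory.
Local Open Scope ring_scope.

Section Aux.
Variable (F : finFieldType) (n : nat).

Definition is_min (S : {set 'rV[F]_n}) (m : nat) :=
  (forall c, c \in S -> (m <= wgt c)%N) /\ exists2 c, c \in S & m = wgt c.

Definition rel (S : {set 'rV[F]_n}) (o : option nat) :=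
  match o with None => forall c, c \notin S | Some m => is_min S m end.

Definition setmin (S : {set 'rV[F]_n}) : option nat :=
  match [pick c in S] with
  | Some c0 => Some (\big[minn/wgt c0]_(c in S) wgt c)
  | None => None
  end.

Lemma bigmin_le (I : eqType) (r : seq I) (P : pred I) (f : I -> nat) idx c :
  c \in r -> P c -> (\big[minn/idx]_(i <- r | P i) f i <= f c)%N.
Proof.
elim: r => [|x r IH] //; rewrite inE big_cons => /orP [/eqP <-|h] Pc.
  by rewrite Pc geq_minl.
case: (P x); last exact: IH.
exact: leq_trans (geq_minr _ _) (IH h Pc).
Qed.

Lemma rel_setmin S : rel S (setmin S).
Proof.
rewrite /setmin; case: pickP => [c0 Hc0|H] /=; last by move=> c; rewrite H.
split.
- move=> c Hc; by apply: bigmin_le; rewrite ?mem_index_enum.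
- apply: (big_ind (fun x => exists2 c, c \in S & x = wgt c)).
  + by exists c0.
  + move=> x y [a Ha ->] [b Hb ->]; case: (leqP (wgt a) (wgt b)) => h.
    * by exists a.
    * by exists b.
  + by move=> c Hc; exists c.
Qed.

Lemma rel_uniq S o o' : rel S o -> rel S o' -> o = o'.
Proof.
case: o => [m|]; case: o' => [m'|] //=.
- move=> [H1 [c1 Hc1 E1]] [H2 [c2 Hc2 E2]]; congr Some.
  apply/eqP; rewrite eqn_leq; apply/andP; split.
  + by rewrite E2; apply: H1.
  + by rewrite E1; apply: H2.
- by move=> [_ [c Hc _]] H; move: (H c); rewrite Hc.
- by move=> H [_ [c Hc _]]; move: (H c); rewrite Hc.
Qed.

Arguments rel_uniq {S o o'}.

Lemma rel_union S1 S2 o1 o2 : rel S1 o1 -> rel S2 o2 ->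
  rel (S1 :|: S2) (minO o1 o2).
Proof.
case: o1 => [m1|]; case: o2 => [m2|] /=.
- move=> [H1 [c1 Hc1 E1]] [H2 [c2 Hc2 E2]]; split.
  + move=> c; rewrite inE => /orP [h|h].
    * exact: leq_trans (geq_minl _ _) (H1 _ h).
    * exact: leq_trans (geq_minr _ _) (H2 _ h).
  + case: (leqP m1 m2) => h.
    * by exists c1; rewrite ?inE ?Hc1.
    * by exists c2; rewrite ?inE ?Hc2 ?orbT.
- move=> [H1 [c1 Hc1 E1]] H2; split.
  + move=> c; rewrite inE => /orP [h|h]; first exact: H1.
    by move: (H2 c); rewrite h.
  + by exists c1; rewrite ?inE ?Hc1.
- move=> H1 [H2 [c2 Hc2 E2]]; split.
  + move=> c; rewrite inE => /orP [h|h]; last exact: H2.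
    by move: (H1 c); rewrite h.
  + by exists c2; rewrite ?inE ?Hc2 ?orbT.
- by move=> H1 H2 c; rewrite inE negb_or H1 H2.
Qed.

Arguments rel_union {S1 S2 o1 o2}.

Lemma dZE mx mz (HX : 'M[F]_(mx, n)) (HZ : 'M[F]_(mz, n)) :
  dZ HX HZ = setmin (dZ_set HX HZ).
Proof. by []. Qed.

Lemma key_gen mx mz my mw (HX : 'M[F]_(mx, n)) (Y : 'M[F]_(my, n))
  (HZ : 'M[F]_(mz, n)) (W : 'M[F]_(mw, n)) :
  col_mx HZ W *m Y^T = 0 ->
  dZ HX HZ = minO (dZ (col_mx HX Y) HZ) (dZ HX (col_mx HZ W)).
Proof.
move=> HW.
have Eset : dZ_set HX HZ = dZ_set (col_mx HX Y) HZ :|: dZ_set HX (col_mx HZ W).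
  apply/setP => c; rewrite !inE /in_dual mul_col_mx col_mx_eq0.
  have pq : (c <= HZ)%MS -> (c <= col_mx HZ W)%MS.
    move=> h; apply: (submx_trans h).
    have E : HZ = row_mx 1%:M 0 *m col_mx HZ W.
      by rewrite mul_row_col mul1mx mul0mx addr0.
    rewrite [X in (X <= _)%MS]E; exact: submxMl.
  have qb : (c <= col_mx HZ W)%MS -> Y *m c^T == 0.
    case/submxP => D ->; rewrite trmx_mul mulmxA -[Y]trmxK -trmx_mul HW.
    by rewrite trmx0 mul0mx.
  move: pq qb; case: (HX *m c^T == 0); case: (Y *m c^T == 0);
    case: (c <= HZ)%MS; case: (c <= col_mx HZ W)%MS => //= h1 h2;
    try (by move: (h1 isT)); by move: (h2 isT).
rewrite !dZE Eset.
set S1 := dZ_set _ HZ. set S2 := dZ_set HX _.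
exact: (rel_uniq (rel_setmin (S1 :|: S2)) (rel_union (rel_setmin S1) (rel_setmin S2))).
Qed.

End Aux.

Theorem mainTheorem7 (F : finFieldType) (l : nat) (A B EA FA EB FB : 'M[F]_l) :
  A *m B = B *m A ->
  assoc_idempotents A EA FA ->
  assoc_idempotents B EB FB ->
  let HX := row_mx A B in
  let HZ := row_mx B^T (- A^T) in
  let HXL := col_mx (row_mx A B) (row_mx 0 (1%:M - EA)) in
  let HXR := col_mx (row_mx A B) (row_mx (1%:M - EB) 0) in
  let HZL := col_mx (row_mx B^T (- A^T)) (row_mx (1%:M - FA)^T 0) in
  let HZR := col_mx (row_mx B^T (- A^T)) (row_mx 0 (1%:M - FB)^T) in
  dZ HX HZ = minO (dZ HXL HZ) (dZ HX HZL) /\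
  dZ HX HZ = minO (dZ HXR HZ) (dZ HX HZR).
Proof.
move=> _ [_ [_ [_ [_ [EAA _]]]]] [_ [_ [_ [_ [EBB _]]]]] HX HZ HXL HXR HZL HZR.
split; apply: key_gen.
- rewrite tr_row_mx trmx0 mul_col_mx !mul_row_col.
  rewrite !mulmx0 mul0mx !addr0 add0r mulNmx -trmx_mul mulmxBl mul1mx EAA subrr trmx0 oppr0.
  by rewrite col_mx0.
- rewrite tr_row_mx trmx0 mul_col_mx !mul_row_col.
  rewrite !mulmx0 mul0mx !addr0 -trmx_mul mulmxBl mul1mx EBB subrr trmx0.
  by rewrite col_mx0.
Qed.
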